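(* Let $\tau$ be an infinite cardinal and let $X$ be a space with $\chi(X)\le\tau$. (a) If $X$ is a coset space of a $\tau$-balanced group $G$ (or there is a continuous transitive $d$-open action $\alpha$ of a $\tau$-balanced group $G$ on $X$), then $X$ is a coset space of a topological group $H$ (or there is a continuous transitive $d$-open action $\gamma$ of a topological group $H$ on $X$) with $\chi(H)\le\tau$. (b) If $X$ is a coset space of a $\tau$-narrow group $G$ (or there is a continuous transitive $d$-open action $\alpha$ of a $\tau$-narrow group $G$ on $X$), then $X$ is a coset space of a topological group $H$ (or there is a continuous transitive $d$-open action $\gamma$ of a topological group $H$ on $X$) with $w(H)\le\tau$, and hence $w(X)\le\tau$. Moreover, in each case there is an equivariant pair of maps $(\varphi,\mathrm{id}):(G,X,\alpha)\to(H,X,\gamma)$ with $\varphi$ an epimorphism (in the coset space case $\alpha,\gamma$ are the natural actions by left translations).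
   Context: All spaces are Tychonoff. $X$ is a coset space of a topological group $G$ if $X$ is homeomorphic to the left coset space $G/K$ (quotient topology) of some closed subgroup $K$; $G$ then acts on $X$ by left translations. An action $\alpha$ of $G$ on $X$ is $d$-open if $x\in\operatorname{Int}(\operatorname{cl}(Ox))$ for every $x\in X$ and every neighborhood $O$ of the unit. An equivariant pair $(\varphi,\mathrm{id}):(G,X,\alpha)\to(H,X,\gamma)$ is a continuous homomorphism $\varphi$ with $\alpha(g,x)=\gamma(\varphi(g),x)$. $G$ is $\tau$-narrow if for every neighborhood $U$ of the unit there is $A\subset G$, $|A|\le\tau$, with $AU=G$; $\tau$-balanced if for every neighborhood $U$ of the unit there is a family $\gamma$ of at most $\tau$ neighborhoods of the unit such that each $x\in G$ has some $V\in\gamma$ with $xVx^{-1}\subset U$. *)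

(* Defs.v *)
From HB Require Import structures.
From mathcomp Require Import all_boot all_order all_algebra.
From mathcomp Require Import all_classical all_reals all_analysis.
From mathcomp Require Import Rstruct Rstruct_topology.
Set Implicit Arguments. Unset Strict Implicit. Unset Printing Implicit Defensive.
Local Open Scope classical_set_scope.

(* A cardinal tau is represented by a type K, tau = |K|; "|A| <= tau" is
   A #<= [set: K] (existence of an injection A -> K). *)
Definition card_le_tau (K : Type) (T : Type) (A : set T) : Prop :=
  card_le A [set: K].

Definition tychonoff_space (X : topologicalType) : Prop :=
  (forall x : X, closed [set x]) /\
  forall (A : set X) (x : X), closed A -> ~ A x ->
    exists f : X -> Rdefinitions.R,
      continuous f /\ f x = 0%R /\ (forall y, A y -> f y = 1%R).

(* Topological groups (Hausdorff, hence Tychonoff). *)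
Record topGroup := TopGroup {
  tg_sort :> topologicalType;
  tg_mul : tg_sort -> tg_sort -> tg_sort;
  tg_inv : tg_sort -> tg_sort;
  tg_one : tg_sort;
  tg_mulA : forall x y z, tg_mul x (tg_mul y z) = tg_mul (tg_mul x y) z;
  tg_mul1g : forall x, tg_mul tg_one x = x;
  tg_mulVg : forall x, tg_mul (tg_inv x) x = tg_one;
  tg_mul_cont : continuous (fun p : tg_sort * tg_sort => tg_mul p.1 p.2);
  tg_inv_cont : continuous tg_inv;
  tg_hausdorff : hausdorff_space tg_sort }.

Arguments tg_mul {t}.
Arguments tg_inv {t}.
Arguments tg_one {t}.

Definition character_le (K : Type) (X : topologicalType) : Prop :=
  forall x : X, exists B : set (set X), card_le_tau K B /\
    (forall V, B V -> nbhs x V) /\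
    (forall U, nbhs x U -> exists2 V, B V & V `<=` U).

Definition weight_le (K : Type) (X : topologicalType) : Prop :=
  exists B : set (set X), card_le_tau K B /\
    (forall V, B V -> open V) /\
    (forall (U : set X) (x : X), open U -> U x -> exists2 V, B V & V x /\ V `<=` U).

Definition tau_narrow (K : Type) (G : topGroup) : Prop :=
  forall U : set G, nbhs tg_one U ->
    exists A : set G, card_le_tau K A /\
      forall g : G, exists a u, A a /\ U u /\ g = tg_mul a u.

Definition tau_balanced (K : Type) (G : topGroup) : Prop :=
  forall U : set G, nbhs tg_one U ->
    exists gam : set (set G), card_le_tau K gam /\
      (forall V, gam V -> nbhs tg_one V) /\
      forall x : G, exists2 V, gam V &
        forall v, V v -> U (tg_mul (tg_mul x v) (tg_inv x)).

Definition subgroup (G : topGroup) (S : set G) : Prop :=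
  S tg_one /\ forall x y, S x -> S y -> S (tg_mul x (tg_inv y)).

(* X is a coset space of G via pi : pi identifies X with the left coset
   space G/S of a closed subgroup S (pi g = pi h iff g^-1 h in S), and the
   topology of X is the quotient topology. *)
Definition coset_space_via (G : topGroup) (X : topologicalType) (pi : G -> X) : Prop :=
  exists S : set G, subgroup S /\ closed S /\
    (forall y : X, exists g, pi g = y) /\
    (forall g h : G, pi g = pi h <-> S (tg_mul (tg_inv g) h)) /\
    (forall U : set X, open U <-> open (pi @^-1` U)).

Definition cont_action (G : topGroup) (X : topologicalType) (a : G -> X -> X) : Prop :=
  (forall x, a tg_one x = x) /\
  (forall g h x, a (tg_mul g h) x = a g (a h x)) /\
  continuous (fun p : G * X => a p.1 p.2).

Definition transitive_action (G : topGroup) (X : Type) (a : G -> X -> X) : Prop :=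
  forall x y : X, exists g, a g x = y.

Definition d_open_action (G : topGroup) (X : topologicalType) (a : G -> X -> X) : Prop :=
  forall (x : X) (O : set G), nbhs tg_one O ->
    interior (closure ((fun g => a g x) @` O)) x.

Definition epimorphism (G H : topGroup) (phi : G -> H) : Prop :=
  (forall g h, phi (tg_mul g h) = tg_mul (phi g) (phi h)) /\
  continuous phi /\ (forall k : H, exists g, phi g = k).

(* Main.v *)
Require Import Defs.
From mathcomp Require Import all_boot all_order all_algebra.
From mathcomp Require Import all_classical all_reals all_analysis.
Local Open Scope classical_set_scope.
From HB Require Import structures.
From mathcomp Require Import Rstruct Rstruct_topology.
From mathcomp Require Import lra.
Set Implicit Arguments. Unset Strict Implicit. Unset Printing Implicit Defensive.

Lemma card_le_injE T U (A : set T) (B : set U) (u0 : U) :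
  card_le A B -> exists f : T -> U, {in A &, injective f} /\ (forall x, A x -> B (f x)).
Proof.
move=> /card_leP /injfunPex [f _ finj].
exists (fun x => match pselect (A x) with left h => val (f (SigSub (mem_set h))) | right _ => u0 end).
split.
- move=> x y /set_mem Ax /set_mem Ay.
  case: pselect => // hx; case: pselect => // hy.
  move=> /val_inj /finj => /(_ (mem_set I) (mem_set I)) [E]; exact: E.
- move=> x Ax; case: pselect => // hx; exact: set_mem (valP _).
Qed.

Lemma inj_card_le' T U (A : set T) (f : T -> U) :
  {in A &, injective f} -> card_le A [set: U].
Proof.
move=> fi; rewrite -(card_le_eql (inj_card_eq fi)); exact: card_leT.
Qed.

Lemma graph_fun T U (u0 : U) (R : T -> U -> Prop) :
  exists f : T -> U, forall x, (exists y, R x y) -> R x (f x).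
Proof.
exists (fun x => match pselect (exists y, R x y) with
   left h => projT1 (cid h) | right _ => u0 end).
move=> x h; case: pselect => // h'; exact: (projT2 (cid h')).
Qed.

Lemma card_cmp (T U : Type) (t0 : T) (u0 : U) (A : set T) (B : set U) :
  (exists f : T -> U, {in A &, injective f} /\ forall x, A x -> B (f x)) \/
  (exists g : U -> T, {in B &, injective g} /\ forall y, B y -> A (g y)).
Proof.
pose P := fun G : set (T * U) => G `<=` A `*` B /\
  (forall x y y', G (x, y) -> G (x, y') -> y = y') /\
  (forall x x' y, G (x, y) -> G (x', y) -> x = x').
have [G [[GAB [Gf Gi]] Gmax]] : exists G, P G /\ forall B', G `<` B' -> ~ P B'.
  apply: Zorn_bigcup => F FP Ftot; split; [|split].
  - by move=> p [G FG Gp]; exact: (FP G FG).1.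
  - move=> x y y' [G1 F1 h1] [G2 F2 h2].
    case: (Ftot _ _ F1 F2) => s.
    + exact: (FP _ F2).2.1 _ _ _ (s _ h1) h2.
    + exact: (FP _ F1).2.1 _ _ _ h1 (s _ h2).
  - move=> x x' y [G1 F1 h1] [G2 F2 h2].
    case: (Ftot _ _ F1 F2) => s.
    + exact: (FP _ F2).2.2 _ _ _ (s _ h1) h2.
    + exact: (FP _ F1).2.2 _ _ _ h1 (s _ h2).
have [f hf] := graph_fun u0 (fun x y => G (x, y)).
have [g hg] := graph_fun t0 (fun y x => G (x, y)).
case: (pselect (forall x, A x -> exists y, G (x, y))) => [hA|hA].
  left; exists f; split.
  - move=> x x' /set_mem Ax /set_mem Ax' e.
    apply: (Gi _ _ (f x)); first exact: hf (hA _ Ax).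
    by rewrite e; exact: hf (hA _ Ax').
  - by move=> x Ax; have := GAB _ (hf _ (hA _ Ax)); case.
case: (pselect (forall y, B y -> exists x, G (x, y))) => [hB|hB].
  right; exists g; split.
  - move=> y y' /set_mem By /set_mem By' e.
    apply: (Gf (g y)); first exact: hg (hB _ By).
    by rewrite e; exact: hg (hB _ By').
  - by move=> y By; have := GAB _ (hg _ (hB _ By)); case.
exfalso.
move/existsNP: hA => [a /not_implyP [Aa na]].
move/existsNP: hB => [b /not_implyP [Bb nb]].
apply: (Gmax (G `|` [set (a, b)])).
  split; first by move=> p Gp; left.
  by move=> /(_ (a, b) (or_intror erefl)) Gab; apply: na; exists b.
split; [|split].
- by move=> p [/GAB//|->].
- move=> x y y' [h1|h1] [h2|h2].
  + exact: Gf h1 h2.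
  + by case: h2 => ex ey; subst; exfalso; apply: na; exists y.
  + by case: h1 => ex ey; subst; exfalso; apply: na; exists y'.
  + by case: h1 => ex ey; case: h2 => ex' ey'; subst.
- move=> x x' y [h1|h1] [h2|h2].
  + exact: Gi h1 h2.
  + by case: h2 => ex ey; subst; exfalso; apply: nb; exists x.
  + by case: h1 => ex ey; subst; exfalso; apply: nb; exists x'.
  + by case: h1 => ex ey; case: h2 => ex' ey'; subst.
Qed.

Section Hessenberg.
Variable K : Type.
Hypothesis Kinf : infinite_set [set: K].

Let iota_ex : exists i : nat -> K, injective i.
Proof.
have := (infiniteP _).1 Kinf.
move=> /card_leP /injfunPex [f _ finj].
exists (fun n => val (f (SigSub (mem_set (I : setT n))))).
move=> m n /val_inj /finj => /(_ (mem_set I) (mem_set I)) [E]; exact: E.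
Qed.

Lemma hessenberg : exists F : K * K -> K, injective F.
Proof.
have [io ioi] := iota_ex.
pose k0 := io 0%N.
pose pk := (@pickle (nat * nat)%type).
have pki : injective pk by apply: (pcan_inj (@pickleK _)).
pose dom (G : set ((K * K) * K)) a := exists c, G ((a, a), c).
pose G0 : set ((K * K) * K) :=
  fun p => exists m n, p = ((io m, io n), io (pk (m, n))).
pose P := fun G : set ((K * K) * K) =>
  [/\ (forall p c c', G (p, c) -> G (p, c') -> c = c'),
      (forall p p' c, G (p, c) -> G (p', c) -> p = p'),
      (forall a b, (exists c, G ((a, b), c)) <-> (dom G a /\ dom G b)),
      (forall a b c, G ((a, b), c) -> dom G c) &
      (G = set0 \/ G0 `<=` G)].
have domG0 : forall a, dom G0 a <-> exists m, a = io m.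
  move=> a; split.
  - by move=> [c [m [n [e1 e2 _]]]]; exists m.
  - by move=> [m ->]; exists (io (pk (m, m))); exists m, m.
have PG0 : P G0.
  split.
  - move=> p c c' [m [n [-> ->]]] [m' [n' [/ioi em /ioi en ->]]]; by subst.
  - move=> p p' c [m [n [-> ->]]] [m' [n' [-> /ioi/pki [-> ->]]]] //.
  - move=> a b; split.
    + by move=> [c [m [n [-> -> _]]]]; split; apply/domG0; eexists.
    + move=> [/domG0 [m ->] /domG0 [n ->]]; exists (io (pk (m, n))); by exists m, n.
  - by move=> a b c [m [n [_ _ ->]]]; apply/domG0; eexists.
  - by right.
have [G [PG Gmax]] : exists G, P G /\ forall B', G `<` B' -> ~ P B'.
  apply: Zorn_bigcup => F FP Ftot.
  have domU : forall a G, F G -> dom G a -> dom (\bigcup_(X in F) X) a.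
    by move=> a G' FG [c h]; exists c; exists G'.
  split.
  - move=> p c c' [G1 F1 h1] [G2 F2 h2].
    case: (Ftot _ _ F1 F2) => s.
    + by case: (FP _ F2) => Hf _ _ _ _; exact: Hf _ _ _ (s _ h1) h2.
    + by case: (FP _ F1) => Hf _ _ _ _; exact: Hf _ _ _ h1 (s _ h2).
  - move=> p p' c [G1 F1 h1] [G2 F2 h2].
    case: (Ftot _ _ F1 F2) => s.
    + by case: (FP _ F2) => _ Hi _ _ _; exact: Hi _ _ _ (s _ h1) h2.
    + by case: (FP _ F1) => _ Hi _ _ _; exact: Hi _ _ _ h1 (s _ h2).
  - move=> a b; split.
    + move=> [c [G1 F1 h1]]; case: (FP _ F1) => _ _ Hd _ _.
      have [da db] := (Hd a b).1 (ex_intro _ c h1).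
      by split; apply: domU F1 _.
    + move=> [[ca [G1 F1 h1]] [cb [G2 F2 h2]]].
      case: (Ftot _ _ F1 F2) => s.
      * case: (FP _ F2) => _ _ Hd _ _.
        have [c hc] := (Hd a b).2 (conj (ex_intro _ ca (s _ h1)) (ex_intro _ cb h2)).
        by exists c, G2.
      * case: (FP _ F1) => _ _ Hd _ _.
        have [c hc] := (Hd a b).2 (conj (ex_intro _ ca h1) (ex_intro _ cb (s _ h2))).
        by exists c, G1.
  - move=> a b c [G1 F1 h1]; case: (FP _ F1) => _ _ _ Hr _.
    exact: domU F1 (Hr _ _ _ h1).
  - case: (pselect (exists2 G1, F G1 & G0 `<=` G1)) => [[G1 F1 s]|nG].
      by right => p /s h; exists G1.
    left; apply/seteqP; split => // p [G1 F1 h1].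
    case: (FP _ F1) => _ _ _ _ [E|s]; first by rewrite E in h1.
    by exfalso; apply: nG; exists G1.
case: PG => Gf Gi Gd Gr Gz.
have G0G : G0 `<=` G.
  case: Gz => // E; exfalso; apply: (Gmax G0) => //.
  rewrite E; split => // /(_ ((io 0%N, io 0%N), io (pk (0%N, 0%N)))) h.
  by apply: h; exists 0%N, 0%N.
pose D := dom G.
have Dio : forall m, D (io m).
  by move=> m; exists (io (pk (m, m))); apply: G0G; exists m, m.
have [f hf] := graph_fun k0 (fun p c => G (p, c)).
have fG : forall a b, D a -> D b -> G ((a, b), f (a, b)).
  by move=> a b Da Db; apply: hf; apply/Gd.
have fD : forall a b, D a -> D b -> D (f (a, b)).
  by move=> a b Da Db; apply: (Gr a b); exact: fG.
have fi : forall a b a' b', f (a, b) = f (a', b') ->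
    D a -> D b -> D a' -> D b' -> a = a' /\ b = b'.
  move=> a b a' b' e Da Db Da' Db'.
  have := Gi _ _ _ (fG _ _ Da Db); rewrite e => /(_ _ (fG _ _ Da' Db')).
  by case.
case: (card_cmp k0 k0 D (~` D)) => [[j [ji jD]]|[g [gi gD]]]; last first.
  pose h x := if pselect (D x) then f (io 0%N, x) else f (io 1%N, g x).
  have hD : forall x, D (h x).
    move=> x; rewrite /h; case: pselect => Dx; apply: (fD) => //; exact: (gD).
  have hi : injective h.
    move=> x y; rewrite /h; case: pselect => Dx; case: pselect => Dy;
      move/fi=> H; case: H; try (by apply: (Dio)); try (by exact: (gD)); try done.
    - by move=> /ioi.
    - by move=> /ioi.
    - by move=> _; apply: gi; apply/mem_set.
  exists (fun p => f (h p.1, h p.2)) => -[x y] [x' y'] /=.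
  by move/fi => [] // /hi -> /hi ->.
exfalso.
pose E := j @` D.
have ED : forall x, E x -> ~ D x by move=> x [d Dd <-]; exact: jD.
have [ji' hji'] := graph_fun k0 (fun y x => D x /\ j x = y).
have jiD : forall y, E y -> D (ji' y) /\ j (ji' y) = y.
  by move=> y [d Dd <-]; apply: hji'; exists d.
pose r x := if pselect (D x) then x else ji' x.
have rD : forall x, D x \/ E x -> D (r x).
  move=> x hx; rewrite /r; case: pselect => h; first exact: h.
  by case: hx => // Ex; exact: (jiD _ Ex).1.
pose idx a b := if pselect (D a) then 0%N else if pselect (D b) then 1%N else 2%N.
pose N : set ((K * K) * K) := fun q =>
  (D q.1.1 \/ E q.1.1) /\ (D q.1.2 \/ E q.1.2) /\ ~ (D q.1.1 /\ D q.1.2) /\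
  q.2 = j (f (f (io (idx q.1.1 q.1.2), r q.1.1), r q.1.2)).
pose G' := G `|` N.
have domN : forall p c, G (p, c) -> D p.1 /\ D p.2.
  by move=> [a b] c h; apply/Gd; exists c.
have Nval : forall a b, (D a \/ E a) -> (D b \/ E b) ->
    D (f (f (io (idx a b), r a), r b)).
  by move=> a b ha hb; apply: (fD); [apply: (fD); [apply: (Dio)|exact: (rD)]|exact: (rD)].
have NE : forall q, N q -> E q.2.
  move=> [[a b] c] [ha [hb [_ ->]]] /=; exists (f (f (io (idx a b), r a), r b)) => //.
  exact: Nval.
have dom' : forall a, dom G' a <-> D a \/ E a.
  move=> a; split.
  - move=> [c [h|[h _]]]; first by left; exists c.
    by case: h => h; [left|right].
  - move=> [Da|Ea]; first by have [c hc] := Da; exists c; left.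
    exists (j (f (f (io (idx a a), r a), r a))); right.
    split; first by right. split; first by right.
    by split => //= -[Da _]; exact: ED Ea Da.
have idxP : forall a b, (D a \/ E a) -> (D b \/ E b) -> ~ (D a /\ D b) ->
   forall a' b', (D a' \/ E a') -> (D b' \/ E b') -> ~ (D a' /\ D b') ->
   idx a b = idx a' b' -> (D a <-> D a') /\ (D b <-> D b').
  move=> a b ha hb nab a' b' ha' hb' nab'; rewrite /idx.
  case: pselect => Da; case: pselect => Da'; case: pselect => Db;
    case: pselect => Db' //; try tauto.
have rinj : forall x y, (D x \/ E x) -> (D y \/ E y) -> (D x <-> D y) ->
    r x = r y -> x = y.
  move=> x y hx hy hxy; rewrite /r; case: pselect => Dx; case: pselect => Dy //=;
    try (exfalso; tauto).
  case: hx => // Ex; case: hy => // Ey e.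
  by rewrite -(jiD _ Ex).2 -(jiD _ Ey).2 e.
apply: (Gmax G').
  split; first by move=> q h; left.
  move=> /(_ ((j k0, j k0), j (f (f (io (idx (j k0) (j k0)), r (j k0)), r (j k0))))).
  move=> hh.
  have Ejk : E (j k0) by exists k0 => //; exact: (Dio).
  have NX : N ((j k0, j k0), j (f (f (io (idx (j k0) (j k0)), r (j k0)), r (j k0)))).
    split; first by right. split; first by right.
    by split => //= -[h _]; exact: ED Ejk h.
  have [/= h1 _] := domN _ _ (hh (or_intror NX)); exact: ED Ejk h1.
split.
- move=> p c c' [h|h] [h'|h'].
  + exact: Gf h h'.
  + by case: h' => _ [_ [nd _]]; exfalso; apply: nd; exact: domN h.
  + by case: h => _ [_ [nd _]]; exfalso; apply: nd; exact: domN h'.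
  + by case: h => _ [_ [_ /= ->]]; case: h' => _ [_ [_ /= ->]].
- move=> p p' c [h|h] [h'|h'].
  + exact: Gi h h'.
  + exfalso; have := NE _ h' => /= /ED; apply; move: p h {h'} => [a b] h.
    exact: Gr h.
  + exfalso; have := NE _ h => /= /ED; apply; move: p' h' {h} => [a b] h.
    exact: Gr h.
  + move: p p' h h' => [a b] [a' b'] [ha [hb [nab /= ec]]] [ha' [hb' [nab' /= ec']]].
    have := ec; rewrite ec' => /ji; rewrite !inE.
    move=> /(_ (Nval _ _ ha' hb') (Nval _ _ ha hb)) /esym.
    move/fi => [] //; [apply: (fD); [apply: (Dio)|exact: (rD)]|exact: (rD)|
                      apply: (fD); [apply: (Dio)|exact: (rD)]|exact: (rD)|].
    move/fi => [] //; try apply: (Dio); try exact: (rD).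
    move=> /ioi eidx era erb.
    have [iA iB] := idxP _ _ ha hb nab _ _ ha' hb' nab' eidx.
    by congr (_, _); [exact: (rinj _ _ ha ha' iA era) | exact: (rinj _ _ hb hb' iB erb)].
- move=> a b; rewrite !dom'; split.
  + move=> [c [h|[? [? _]]]] //; have [/= Da Db] := domN _ _ h; tauto.
  + move=> [ha hb]; case: (pselect (D a /\ D b)) => [[Da Db]|nab].
      by exists (f (a, b)); left; exact: fG.
    by exists (j (f (f (io (idx a b), r a), r b))); right.
- move=> a b c [h|h]; apply/dom'.
  + by left; exact: Gr h.
  + by right; exact: NE _ h.
- by right => q /G0G h; left.
Qed.

End Hessenberg.

Section Small.
Variable K : Type.
Hypothesis Kinf : infinite_set [set: K].

Lemma K_inhabited : exists k : K, True.
Proof.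
have := (infiniteP _).1 Kinf.
move=> /card_leP /injfunPex [f _ _].
by exists (val (f (SigSub (mem_set (I : setT 0%N))))).
Qed.

Lemma nat_inj_K : exists i : nat -> K, injective i.
Proof.
have := (infiniteP _).1 Kinf.
move=> /card_leP /injfunPex [f _ finj].
exists (fun n => val (f (SigSub (mem_set (I : setT n))))).
move=> m n /val_inj /finj => /(_ (mem_set I) (mem_set I)) [E]; exact: E.
Qed.

Lemma surj_of_inj (T : Type) (t0 : T) (F : T -> K) : injective F ->
  exists p : K -> T, forall t, p (F t) = t.
Proof.
move=> Fi; have [p hp] := graph_fun t0 (fun k t => F t = k).
exists p => t; apply: Fi; apply: hp; by exists t.
Qed.

Lemma surj_KK : exists p : K -> K * K, forall q, exists k, p k = q.
Proof.
have [k0 _] := K_inhabited.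
have [F Fi] := hessenberg Kinf.
have [p hp] := surj_of_inj (k0, k0) Fi.
by exists p => q; exists (F q).
Qed.

Lemma surj_KnK : exists p : K -> nat * K, forall q, exists k, p k = q.
Proof.
have [k0 _] := K_inhabited.
have [F Fi] := hessenberg Kinf.
have [io ioi] := nat_inj_K.
have Gi : injective (fun q : nat * K => F (io q.1, q.2)).
  by move=> [m a] [n b] /Fi [/ioi -> ->].
have [p hp] := surj_of_inj (0%N, k0) Gi.
by exists p => q; exists (F (io q.1, q.2)).
Qed.

Lemma small_card_le (T : Type) (A : set T) (s : K -> T) :
  A `<=` range s -> card_le A [set: K].
Proof.
move=> As; have [k0 _] := K_inhabited.
have [g hg] := graph_fun k0 (fun x k => s k = x).
apply: (@inj_card_le' _ _ _ g) => x y /set_mem Ax /set_mem Ay e.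
have [k _ hk] := As _ Ax; have [k' _ hk'] := As _ Ay.
rewrite -(hg x); last by exists k.
rewrite -(hg y); last by exists k'.
by rewrite e.
Qed.

Lemma enum_of_card_le (T : Type) (A : set T) (t0 : T) : A t0 ->
  card_le A [set: K] -> exists s : K -> T, (forall k, A (s k)) /\ A `<=` range s.
Proof.
move=> At0; have [k0 _] := K_inhabited.
move=> /(card_le_injE k0) [i [ii _]].
have [s hs] := graph_fun t0 (fun k x => A x /\ i x = k).
exists (fun k => if pselect (exists x, A x /\ i x = k) then s k else t0); split.
- by move=> k; case: pselect => // h; exact: (hs _ h).1.
- move=> x Ax; exists (i x) => //; case: pselect => h; last by exfalso; apply: h; exists x.
  have [Ax' e] := hs _ h; apply: ii; rewrite ?inE //.
Qed.

End Small.


Section GroupLemmas.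
Variable G : topGroup.
Local Notation "x * y" := (tg_mul x y).
Local Notation "x ^-1" := (tg_inv x).
Local Notation "1" := (@tg_one G).
Implicit Types x y z : G.

Lemma mulgA x y z : x * (y * z) = x * y * z. Proof. exact: tg_mulA. Qed.
Lemma mul1g x : 1 * x = x. Proof. exact: tg_mul1g. Qed.
Lemma mulVg x : x^-1 * x = 1. Proof. exact: tg_mulVg. Qed.
Lemma mulKg x y : x^-1 * (x * y) = y.
Proof. by rewrite mulgA mulVg mul1g. Qed.
Lemma mulgV x : x * x^-1 = 1.
Proof.
by rewrite -[LHS]mul1g -{1}(mulVg (x^-1)) -mulgA (mulKg x) mulVg.
Qed.
Lemma mulg1 x : x * 1 = x.
Proof. by rewrite -(mulVg x) mulgA mulgV mul1g. Qed.
Lemma mulVKg x y : x * (x^-1 * y) = y.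
Proof. by rewrite mulgA mulgV mul1g. Qed.
Lemma mulgK x y : x * y * y^-1 = x.
Proof. by rewrite -mulgA mulgV mulg1. Qed.
Lemma mulgVK x y : x * y^-1 * y = x.
Proof. by rewrite -mulgA mulVg mulg1. Qed.
Lemma mulg_injl x : injective (tg_mul x).
Proof. by move=> y z e; rewrite -(mulKg x y) e mulKg. Qed.
Lemma invgK x : (x^-1)^-1 = x.
Proof. by rewrite -[LHS]mulg1 -(mulVg x) mulgA mulVg mul1g. Qed.
Lemma invMg x y : (x * y)^-1 = y^-1 * x^-1.
Proof.
have e : x * y * (y^-1 * x^-1) = 1 by rewrite -mulgA (mulVKg y) mulgV.
by rewrite -[LHS]mulg1 -e mulKg.
Qed.
Lemma invg1 : (1 : G)^-1 = 1.
Proof. by rewrite -[_^-1]mul1g mulgV. Qed.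
Lemma eq_invg x y : x^-1 = y^-1 -> x = y.
Proof. by move=> e; rewrite -(invgK x) e invgK. Qed.

Lemma nbhs_mul x y (W : set G) : nbhs (x * y) W ->
  exists2 U, nbhs x U & exists2 V, nbhs y V & forall a b, U a -> V b -> W (a * b).
Proof.
move=> hW; have := @tg_mul_cont G (x, y) W hW.
move=> [[U V] /= [hU hV] sub]; exists U => //; exists V => // a b Ua Vb.
exact: (sub (a, b)).
Qed.

Lemma nbhs_inv x (W : set G) : nbhs (x^-1) W -> nbhs x [set a | W (a^-1)].
Proof. by move=> hW; exact: (@tg_inv_cont G x W hW). Qed.

Lemma nbhs_lmul x y (W : set G) : nbhs (x * y) W -> nbhs y [set b | W (x * b)].
Proof.
move=> /nbhs_mul [U hU [V hV s]]; apply: filterS hV => b Vb.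
by apply: s => //; exact: nbhs_singleton hU.
Qed.

Lemma nbhs_rmul x y (W : set G) : nbhs (x * y) W -> nbhs x [set a | W (a * y)].
Proof.
move=> /nbhs_mul [U hU [V hV s]]; apply: filterS hU => a Ua.
by apply: s => //; exact: nbhs_singleton hV.
Qed.

Lemma nbhs_transl x (V : set G) : nbhs 1 V -> nbhs x [set a | V (x^-1 * a)].
Proof. by move=> hV; apply: nbhs_lmul; rewrite mulVg. Qed.

Lemma nbhs_transl' x (V : set G) : nbhs x V -> nbhs 1 [set a | V (x * a)].
Proof. by move=> hV; apply: nbhs_lmul; rewrite mulg1. Qed.

End GroupLemmas.

Section ActionLemmas.
Variables (G : topGroup) (X : topologicalType) (alpha : G -> X -> X).
Hypothesis act : cont_action alpha.

Lemma act1 x : alpha tg_one x = x. Proof. by case: act. Qed.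
Lemma actM g h x : alpha (tg_mul g h) x = alpha g (alpha h x).
Proof. by case: act => _ []. Qed.
Lemma actK g x : alpha (tg_inv g) (alpha g x) = x.
Proof. by rewrite -actM mulVg act1. Qed.
Lemma actVK g x : alpha g (alpha (tg_inv g) x) = x.
Proof. by rewrite -actM mulgV act1. Qed.

Lemma nbhs_act g x (W : set X) : nbhs (alpha g x) W ->
  exists2 U, nbhs g U & exists2 Ob, nbhs x Ob & forall h y, U h -> Ob y -> W (alpha h y).
Proof.
move=> hW; case: act => _ [_ c]; have := c (g, x) W hW.
move=> [[U V] /= [hU hV] sub]; exists U => //; exists V => // a b Ua Vb.
exact: (sub (a, b)).
Qed.

Lemma nbhs_act_pt g x (W : set X) : nbhs (alpha g x) W -> nbhs x [set y | W (alpha g y)].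
Proof.
move=> /nbhs_act [U hU [Ob hO s]]; apply: filterS hO => y Oy.
by apply: s => //; exact: nbhs_singleton hU.
Qed.

Lemma nbhs_act_grp g x (W : set X) : nbhs (alpha g x) W -> nbhs g [set h | W (alpha h x)].
Proof.
move=> /nbhs_act [U hU [Ob hO s]]; apply: filterS hU => h Uh.
by apply: s => //; exact: nbhs_singleton hO.
Qed.

End ActionLemmas.


Section HBuild.
Variables (G : topGroup) (X : topologicalType) (alpha : G -> X -> X).
Hypothesis act : cont_action alpha.
Hypothesis XH : hausdorff_space X.
Variables (K : Type) (s : K -> set G).
Local Notation "x * y" := (tg_mul x y).
Local Notation "x ^-1" := (tg_inv x).
Local Notation "1" := (@tg_one G).
Local Notation gamma := (range s).

Hypothesis gne : exists V, gamma V.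
Hypothesis gone : forall V, gamma V -> V 1.
Hypothesis gmeet : forall V1 V2, gamma V1 -> gamma V2 ->
  exists2 W, gamma W & W `<=` V1 `&` V2.
Hypothesis ghalf : forall V, gamma V ->
  exists2 W, gamma W & forall a b, W a -> W b -> V (a * b).
Hypothesis ginv : forall V, gamma V -> exists2 W, gamma W & forall a, W a -> V (a^-1).
Hypothesis gconj : forall V x, gamma V ->
  exists2 W, gamma W & forall a, W a -> V (x * a * x^-1).
Hypothesis gnb : forall V, gamma V -> nbhs 1 V.
Hypothesis gP : forall (y : X) (W : set X), nbhs y W -> exists2 V, gamma V &
  exists2 Ob, nbhs y Ob & forall v o, V v -> Ob o -> W (alpha v o).

Definition Hcar := {f : X -> X | exists g, f = alpha g}.
HB.instance Definition _ := gen_eqMixin Hcar.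
HB.instance Definition _ := gen_choiceMixin Hcar.

Definition phi0 (g : G) : Hcar := exist _ (alpha g) (ex_intro _ g erefl).
Definition rep (p : Hcar) : G := projT1 (cid (proj2_sig p)).

Lemma alpha_rep p : alpha (rep p) = proj1_sig p.
Proof. by rewrite /rep; case: cid => g /= ->. Qed.

Lemma Hval_inj (p q : Hcar) : proj1_sig p = proj1_sig q -> p = q.
Proof. by case: p => f pf; case: q => f' pf' /= e; exact: eq_exist. Qed.

Lemma repE p : phi0 (rep p) = p.
Proof. by apply: Hval_inj; rewrite /= alpha_rep. Qed.

Lemma phi0_eq g h : alpha g = alpha h -> phi0 g = phi0 h.
Proof. by move=> e; apply: Hval_inj. Qed.

Definition Hmul (p q : Hcar) : Hcar := phi0 (rep p * rep q).
Definition Hinv (p : Hcar) : Hcar := phi0 ((rep p)^-1).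
Definition Hone : Hcar := phi0 1.

Lemma alpha_phi0_rep g : alpha (rep (phi0 g)) = alpha g.
Proof. by rewrite alpha_rep. Qed.

Lemma phiM g h : Hmul (phi0 g) (phi0 h) = phi0 (g * h).
Proof.
apply: phi0_eq; apply: funext => x.
by rewrite !(actM act) !alpha_phi0_rep.
Qed.

Lemma phiV g : Hinv (phi0 g) = phi0 (g^-1).
Proof.
apply: phi0_eq; apply: funext => x.
set r := rep (phi0 g).
have e : alpha r = alpha g by rewrite alpha_phi0_rep.
rewrite -{1}(actVK act g x) -e (actK act) //.
Qed.

Lemma HmulA p q r : Hmul p (Hmul q r) = Hmul (Hmul p q) r.
Proof.
by rewrite -(repE p) -(repE q) -(repE r) !phiM mulgA.
Qed.

Lemma Hmul1 p : Hmul Hone p = p.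
Proof. by rewrite -(repE p) /Hone phiM mul1g. Qed.

Lemma HmulV p : Hmul (Hinv p) p = Hone.
Proof. by rewrite -(repE p) phiV phiM mulVg. Qed.

Definition Hnbhs (p : Hcar) : set_system Hcar :=
  fun U => exists2 V, gamma V & forall v, V v -> U (Hmul p (phi0 v)).

HB.instance Definition _ := hasNbhs.Build Hcar Hnbhs.

Lemma HnbhsE p U : nbhs p U = Hnbhs p U.
Proof. by []. Qed.

Lemma Hmul1r p : Hmul p Hone = p.
Proof. by rewrite -(repE p) /Hone phiM mulg1. Qed.

Lemma Hnbhs_filter p : ProperFilter (@nbhs _ Hcar p).
Proof.
split.
  move=> [V gV sV]; exact: (sV _ (gone gV)).
split.
- by have [V gV] := gne; exists V.
- move=> A B [V1 g1 s1] [V2 g2 s2].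
  have [W gW sW] := gmeet g1 g2; exists W => // v Wv.
  by have [h1 h2] := sW _ Wv; split; [exact: s1|exact: s2].
- by move=> A B AB [V gV sV]; exists V => // v Vv; apply: AB; exact: sV.
Qed.

Lemma Hnbhs_singleton (p : Hcar) (A : set Hcar) : nbhs p A -> A p.
Proof. by move=> [V gV sV]; have := sV _ (gone gV); rewrite /Hone Hmul1r. Qed.

Lemma Hnbhs_nbhs (p : Hcar) (A : set Hcar) : nbhs p A -> nbhs p (nbhs^~ A).
Proof.
move=> [V gV sV]; have [W gW sW] := ghalf gV.
exists W => // w Ww; exists W => // w' Ww'.
rewrite -HmulA -(repE p) !phiM; rewrite -(repE p) in sV.
have := sV _ (sW _ _ Ww Ww'); by rewrite phiM.
Qed.

HB.instance Definition _ := Nbhs_isNbhsTopological.Build Hcar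
  Hnbhs_filter Hnbhs_singleton Hnbhs_nbhs.

Definition Htop : topologicalType := Hcar.

Lemma Hmul_cont : continuous (fun x : Htop * Htop => Hmul x.1 x.2).
Proof.
move=> [p q] U /= [V gV sV].
rewrite -(repE p) -(repE q) in sV *; move: (rep p) (rep q) sV => a b sV.
have [V' gV' sV'] := ghalf gV.
have [W gW sW] := gconj (b^-1) gV'.
exists ([set h | exists2 w, W w & h = Hmul (phi0 a) (phi0 w)],
        [set h | exists2 v, V' v & h = Hmul (phi0 b) (phi0 v)]).
  by split; [exists W => // w Ww; exists w|exists V' => // v Vv; exists v].
move=> [h1 h2] [/= [w Ww ->] [v Vv ->]] /=.
have := sV _ (sV' _ _ (sW _ Ww) Vv); rewrite !phiM.
congr U; congr phi0; rewrite invgK !mulgA mulgK //.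
Qed.

Lemma Hinv_cont : continuous (Hinv : Htop -> Htop).
Proof.
move=> p U /= [V gV sV].
rewrite -(repE p) phiV in sV *; move: (rep p) sV => a sV.
have [W0 gW0 sW0] := gconj a gV.
have [W gW sW] := ginv gW0.
exists W => // w Ww; rewrite /= phiM phiV.
have := sV _ (sW0 _ (sW _ Ww)); rewrite phiM; congr U; congr phi0.
by rewrite invMg !mulgA mulVg mul1g.
Qed.

Lemma Hhaus : hausdorff_space Htop.
Proof.
move=> p q hpq; apply: contrapT => npq.
rewrite -(repE p) -(repE q) in hpq npq; move: (rep p) (rep q) hpq npq => a b hpq npq.
have [y ny] : exists y, alpha a y <> alpha b y.
  apply: contrapT => h; apply: npq; apply: phi0_eq; apply: funext => y.
  by apply: contrapT => h'; apply: h; exists y.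
have : ~ cluster (nbhs (alpha a y)) (alpha b y) by move/XH.
move=> /existsNP [A /existsNP [B /not_implyP [nA /not_implyP [nB AB]]]].
have W1 := nbhs_act_pt act nA; have W2 := nbhs_act_pt act nB.
have [V gV [Ob nOb sOb]] := gP (filterI W1 W2).
have Oby := nbhs_singleton nOb.
have [r [[v Vv ->] [v' Vv' e]]] := hpq
  [set h | exists2 v, V v & h = Hmul (phi0 a) (phi0 v)]
  [set h | exists2 v, V v & h = Hmul (phi0 b) (phi0 v)]
  (ex_intro2 _ _ V gV (fun v Vv => ex_intro2 _ _ v Vv erefl))
  (ex_intro2 _ _ V gV (fun v Vv => ex_intro2 _ _ v Vv erefl)).
move: e; rewrite !phiM => /(congr1 (@proj1_sig _ _)) /= e.
apply: AB; exists (alpha (a * v) y); split.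
  by rewrite (actM act); exact: (sOb _ _ Vv Oby).1.
by rewrite e (actM act); exact: (sOb _ _ Vv' Oby).2.
Qed.

Definition Hgrp : topGroup :=
  @TopGroup Htop Hmul Hinv Hone HmulA Hmul1 HmulV Hmul_cont Hinv_cont Hhaus.

Definition gam (h : Hgrp) (x : X) : X := proj1_sig h x.
Definition phi (g : G) : Hgrp := phi0 g.

Lemma gam_phi g x : alpha g x = gam (phi g) x.
Proof. by []. Qed.

Lemma phi_mul g h : phi (g * h) = tg_mul (phi g) (phi h).
Proof. by rewrite /= phiM. Qed.

Lemma phi_one : phi 1 = tg_one.
Proof. by []. Qed.

Lemma gam_cont : cont_action gam.
Proof.
split; first by move=> x; rewrite /gam /= (act1 act).
split.
  move=> p q x; rewrite /gam /= (actM act) !alpha_rep //.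
move=> [p x] W /=; rewrite /gam -(repE p) /= => hW.
move: (rep p) hW => a hW.
have [V gV [Ob nOb sOb]] := gP (nbhs_act_pt act hW).
exists ([set h | exists2 v, V v & h = Hmul (phi0 a) (phi0 v)], Ob).
  by split => //; exists V => // v Vv; exists v.
move=> [h o] [/= [v Vv ->] Oo] /=; rewrite (actM act) !alpha_rep /=.
exact: sOb.
Qed.

Lemma phi_cont : continuous phi.
Proof.
move=> g U /= [V gV sV].
apply: filterS (nbhs_transl g (gnb gV)) => z /= Vz.
have := sV _ Vz; rewrite /phi phiM mulVKg //.
Qed.

Lemma phi_epi : epimorphism phi.
Proof.
split; first exact: phi_mul.
split; first exact: phi_cont.
by move=> k; exists (rep k); rewrite /phi repE.
Qed.

Hypothesis Kinf : infinite_set [set: K].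

Lemma H_character : character_le K Hgrp.
Proof.
move=> p.
pose s' := fun k => [set h : Hgrp | exists2 v, s k v & h = Hmul p (phi0 v)].
exists (range s'); split; [|split].
- exact: (small_card_le Kinf (s := s')).
- move=> _ [k _ <-]; exists (s k); first by exists k.
  by move=> v Vv; exists v.
- move=> U [V [k _ <-] sV]; exists (s' k); first by exists k.
  by move=> _ [v Vv ->]; exact: sV.
Qed.

Lemma HBuild_main : exists (H : topGroup) (gm : H -> X -> X) (ph : G -> H),
  cont_action gm /\ character_le K H /\ epimorphism ph /\
  (forall g x, alpha g x = gm (ph g) x).
Proof.
exists Hgrp, gam, phi; split; first exact: gam_cont.
split; first exact: H_character.
by split; [exact: phi_epi|].
Qed.

End HBuild.


Section Gamma.
Variables (K : Type) (Kinf : infinite_set [set: K]).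
Variable G : topGroup.
Local Notation "x * y" := (tg_mul x y).
Local Notation "x ^-1" := (tg_inv x).
Local Notation "1" := (@tg_one G).
Hypothesis Gbal : tau_balanced K G.
Variable b : K -> set G.
Hypothesis bnb : forall k, nbhs 1 (b k).

Lemma half_ex : exists half : set G -> set G, forall V, nbhs 1 V ->
  nbhs 1 (half V) /\ forall a c, half V a -> half V c -> V (a * c).
Proof.
have h : forall V : set G, exists W : set G, nbhs 1 V ->
    nbhs 1 W /\ forall a c, W a -> W c -> V (a * c).
  move=> V; case: (pselect (nbhs 1 V)) => hV; last by exists setT.
  rewrite -[X in nbhs X V](mul1g) in hV.
  have [U hU [V' hV' sV]] := nbhs_mul hV.
  exists (U `&` V') => _; split; first exact: filterI.
  by move=> a c [Ua _] [_ Vc]; exact: sV.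
have [f hf] := choice h; by exists f.
Qed.

Lemma bal_ex : exists bal : set G -> K -> set G, forall V, nbhs 1 V ->
  (forall k, nbhs 1 (bal V k)) /\
  forall x, exists k, forall v, bal V k v -> V (x * v * x^-1).
Proof.
have h : forall V : set G, exists f : K -> set G, nbhs 1 V ->
    (forall k, nbhs 1 (f k)) /\
    forall x, exists k, forall v, f k v -> V (x * v * x^-1).
  move=> V; case: (pselect (nbhs 1 V)) => hV; last by exists (fun=> setT).
  have [gm [cgm [gmnb gmx]]] := Gbal hV.
  have [W0 gW0 _] := gmx 1.
  have [e [he1 he2]] := enum_of_card_le Kinf gW0 cgm.
  exists e => _; split; first by move=> k; exact: gmnb.
  move=> x; have [W gW sW] := gmx x; have [k _ ek] := he2 _ gW.
  by exists k; rewrite ek.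
have [f hf] := choice h; by exists f.
Qed.

Lemma gamma_ex : exists s : K -> set G,
  (exists V, range s V) /\
  (forall V, range s V -> V 1) /\
  (forall V1 V2, range s V1 -> range s V2 ->
        exists2 W, range s W & W `<=` V1 `&` V2) /\
  (forall V, range s V ->
        exists2 W, range s W & forall a c, W a -> W c -> V (a * c)) /\
  (forall V, range s V -> exists2 W, range s W & forall a, W a -> V (a^-1)) /\
  (forall V x, range s V ->
        exists2 W, range s W & forall a, W a -> V (x * a * x^-1)) /\
  (forall V, range s V -> nbhs 1 V) /\
  (forall k, range s (b k)).
Proof.
have [half hhalf] := half_ex.
have [bal hbal] := bal_ex.
have [p hp] := surj_KK Kinf.
have [q hq] := surj_KnK Kinf.
pose invs (V : set G) := [set a | V (a^-1)].
pose op (V1 V2 : set G) k3 := half V1 `&` V2 `&` bal V1 k3 `&` invs V1.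
pose fam := fix fam n := match n with
  | 0%N => b
  | n.+1 => fun k => op (fam n (p k).1) (fam n (p (p k).2).1) (p (p k).2).2
  end.
have famS : forall n k, fam n.+1 k = op (fam n (p k).1) (fam n (p (p k).2).1) (p (p k).2).2.
  by [].
have opnb : forall V1 V2 k3, nbhs 1 V1 -> nbhs 1 V2 -> nbhs 1 (op V1 V2 k3).
  move=> V1 V2 k3 h1 h2; apply: filterI; [apply: filterI; [apply: filterI|]|].
  - exact: (hhalf _ h1).1.
  - exact: h2.
  - exact: (hbal _ h1).1.
  - by rewrite /invs; apply: nbhs_inv; rewrite invg1.
have famnb : forall n k, nbhs 1 (fam n k).
  elim=> [|n IH] k; first exact: bnb.
  rewrite famS; exact: opnb.
have opex : forall n k1 k2 k3, exists k, fam n.+1 k = op (fam n k1) (fam n k2) k3.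
  move=> n k1 k2 k3; have [r hr] := hp (k2, k3); have [k hk] := hp (k1, r).
  by exists k; rewrite famS hk /= hr.
have halfsub : forall V, nbhs 1 V -> half V `<=` V.
  move=> V hV a ha; rewrite -[a]mulg1; apply: (hhalf _ hV).2 => //.
  exact: nbhs_singleton (hhalf _ hV).1.
have opsub1 : forall V1 V2 k3, nbhs 1 V1 -> op V1 V2 k3 `<=` V1.
  by move=> V1 V2 k3 h1 a [[[ha _] _] _]; exact: halfsub.
have opsub2 : forall V1 V2 k3, op V1 V2 k3 `<=` V2.
  by move=> V1 V2 k3 a [[[_ ha] _] _].
have lift : forall m n k, (m <= n)%N -> exists k', fam n k' `<=` fam m k.
  move=> m n k; elim: n => [|n IH].
    by rewrite leqn0 => /eqP ->; exists k.
  rewrite leq_eqVlt => /orP [/eqP ->|]; first by exists k.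
  rewrite ltnS => /IH [k' hk']; have [k'' hk''] := opex n k' k' k'.
  exists k''; rewrite hk'' => a /opsub1 h; apply: hk'; apply: h; exact: famnb.
pose s k := fam (q k).1 (q k).2.
have rs : forall V, range s V <-> exists n k, V = fam n k.
  move=> V; split; first by move=> [k _ <-]; exists (q k).1, (q k).2.
  by move=> [n [k ->]]; have [k' hk'] := hq (n, k); exists k' => //; rewrite /s hk'.
exists s.
split.
{ by have [k0 _] := K_inhabited Kinf; exists (s k0), k0. }
split.
{ by move=> V /rs [n [k ->]]; exact: nbhs_singleton (famnb n k). }
split.
{ move=> V1 V2 /rs [n1 [k1 ->]] /rs [n2 [k2 ->]].
  have [k1' h1] := lift n1 (maxn n1 n2) k1 (leq_maxl _ _).
  have [k2' h2] := lift n2 (maxn n1 n2) k2 (leq_maxr _ _).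
  have [k hk] := opex (maxn n1 n2) k1' k2' k1'.
  exists (fam (maxn n1 n2).+1 k); first by apply/rs; eexists; eexists.
  rewrite hk => a ha; split; first by apply: h1; apply: (opsub1 _ _ _ (famnb _ _)) ha.
  by apply: h2; exact: opsub2 ha. }
split.
{ move=> V /rs [n [k1 ->]].
  have [k hk] := opex n k1 k1 k1.
  exists (fam n.+1 k); first by apply/rs; eexists; eexists.
  rewrite hk => a c [[[ha _] _] _] [[[hc _] _] _].
  exact: (hhalf _ (famnb n k1)).2. }
split.
{ move=> V /rs [n [k1 ->]].
  have [k hk] := opex n k1 k1 k1.
  exists (fam n.+1 k); first by apply/rs; eexists; eexists.
  by rewrite hk => a [_ ha]. }
split.
{ move=> V x /rs [n [k1 ->]].
  have [k3 hk3] := (hbal _ (famnb n k1)).2 x.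
  have [k hk] := opex n k1 k1 k3.
  exists (fam n.+1 k); first by apply/rs; eexists; eexists.
  by rewrite hk => a [[_ ha] _]; exact: hk3. }
split.
{ by move=> V /rs [n [k ->]]; exact: famnb. }
{ by move=> k; apply/rs; exists 0%N, k. }
Qed.

End Gamma.


Lemma core (K : Type) (Kinf : infinite_set [set: K]) (G : topGroup)
  (X : topologicalType) (XH : hausdorff_space X) (alpha : G -> X -> X)
  (act : cont_action alpha) (trans : transitive_action alpha)
  (Gbal : tau_balanced K G) (chiX : character_le K X) :
  exists (H : topGroup) (gm : H -> X -> X) (ph : G -> H),
  cont_action gm /\ character_le K H /\ epimorphism ph /\
  (forall g x, alpha g x = gm (ph g) x).
Proof.
case: (pselect (exists x : X, True)) => [[x0 _]|nX]; last first.
  have [s [gne [gone [gmeet [ghalf [ginv [gconj [gnb _]]]]]]]] :=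
    @gamma_ex K Kinf G Gbal (fun _ => setT) (fun _ => filterT).
  apply: (HBuild_main act XH gne gone gmeet ghalf ginv gconj gnb _ Kinf).
  by move=> y; exfalso; apply: nX; exists y.
have [B [cB [nB bB]]] := chiX x0.
have [V0 BV0 _] := bB setT filterT.
have [Bx [hBx1 hBx2]] := enum_of_card_le Kinf BV0 cB.
have hUO : forall k, exists UO : set G * set X, nbhs tg_one UO.1 /\ nbhs x0 UO.2 /\
    forall h y, UO.1 h -> UO.2 y -> Bx k (alpha h y).
  move=> k; have := nB _ (hBx1 k); rewrite -{1}(act1 act x0) => /(nbhs_act act).
  by move=> [U hU [Ob hOb sUO]]; exists (U, Ob).
have [uo huo] := choice hUO.
have [s [gne [gone [gmeet [ghalf [ginv [gconj [gnb gb]]]]]]]] :=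
  @gamma_ex K Kinf G Gbal (fun k => (uo k).1) (fun k => (huo k).1).
apply: (HBuild_main act XH gne gone gmeet ghalf ginv gconj gnb _ Kinf).
move=> y W hW.
have [a ha] := trans x0 y.
have hW' : nbhs x0 [set z | W (alpha a z)].
  by apply: (nbhs_act_pt act); rewrite ha.
have [V BV sV] := bB _ hW'.
have [k _ ek] := hBx2 _ BV.
have [W'' gW'' sW''] := gconj (uo k).1 (tg_inv a) (gb k).
exists W'' => //.
exists [set z | (uo k).2 (alpha (tg_inv a) z)].
  apply: (nbhs_act_pt act); rewrite -ha (actK act); exact: (huo k).2.1.
move=> v o Wv Oo.
have e : alpha v o = alpha a (alpha (tg_mul (tg_mul (tg_inv a) v) (tg_inv (tg_inv a)))
   (alpha (tg_inv a) o)).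
  by rewrite -!(actM act) invgK !mulgA mulgK mulgV mul1g.
rewrite e; apply: sV; rewrite -ek; apply: (huo k).2.2 => //.
exact: sW''.
Qed.


Local Open Scope ring_scope.

Lemma tych_reg (X : topologicalType) (tX : tychonoff_space X) (y : X) (W : set X) :
  nbhs y W -> exists2 W', nbhs y W' & closure W' `<=` W.
Proof.
move=> hW; have [B [oB By] BW] : exists2 B, open_nbhs y B & B `<=` W.
  by move: hW; rewrite nbhsE.
have cA : closed (~` B) by rewrite closedC.
have [f [fc [fy f1]]] := tX.2 _ _ cA (fun h => h By).
exists (f @^-1` [set r : Rdefinitions.R | r < 1/2]).
  suff H : nbhs (f y) [set r : Rdefinitions.R | r < 1/2] by have := fc y; move=> /(_ _ H); exact.
  apply: open_nbhs_nbhs; split; first exact: open_lt.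
  by rewrite /= fy; lra.
move=> z cz; apply: contrapT => nWz.
have Az : (~` B) z by move=> Bz; exact: nWz (BW _ Bz).
have hz : nbhs z (f @^-1` [set r : Rdefinitions.R | 1/2 < r]).
  suff H : nbhs (f z) [set r : Rdefinitions.R | 1/2 < r] by have := fc z; move=> /(_ _ H); exact.
  apply: open_nbhs_nbhs; split; first exact: open_gt.
  by rewrite /= f1 //; lra.
have [w [/= w1 w2]] := cz _ hz; lra.
Qed.

Lemma tych_haus (X : topologicalType) (tX : tychonoff_space X) : hausdorff_space X.
Proof.
move=> p q cpq; apply: contrapT => npq.
have hW : nbhs p (~` [set q]).
  apply: open_nbhs_nbhs; split; first by rewrite -closedC setCK; exact: tX.1.
  by move=> /= e; exact: npq e.
have [W' hW' cW'] := tych_reg tX hW.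
have : ~ closure W' q by move=> /cW' /=; apply.
move=> /existsNP [B /not_implyP [nB nWB]].
by apply: nWB; exact: cpq.
Qed.

Local Close Scope ring_scope.

Lemma hom_one (G H : topGroup) (ph : G -> H) :
  (forall g h, ph (tg_mul g h) = tg_mul (ph g) (ph h)) -> ph tg_one = tg_one.
Proof.
move=> hm; apply: (@mulg_injl _ (ph tg_one)).
by rewrite -hm mul1g mulg1.
Qed.

Lemma dopen_transfer (G H : topGroup) (X : topologicalType) (alpha : G -> X -> X)
  (gm : H -> X -> X) (ph : G -> H) :
  d_open_action alpha -> epimorphism ph ->
  (forall g x, alpha g x = gm (ph g) x) -> d_open_action gm.
Proof.
move=> dA [hm [pc _]] e x O hO.
have hO' : nbhs tg_one (ph @^-1` O).
  have h := @pc tg_one O.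
  have h' : nbhs (ph tg_one) O by rewrite (hom_one hm).
  by move: (h h'); exact.
have := dA x _ hO'; apply: filterS.
apply: closure_subset => _ [g Og <-]; exists (ph g) => //; by rewrite e.
Qed.

Lemma narrow_balanced (K : Type) (Kinf : infinite_set [set: K]) (G : topGroup) :
  tau_narrow K G -> tau_balanced K G.
Proof.
move=> nG U hU.
have [U1 hU1 [U2 hU2 s12]] : exists2 U1, nbhs tg_one U1 &
    exists2 U2, nbhs tg_one U2 & forall a c, U1 a -> U2 c -> U (tg_mul a c).
  by apply: nbhs_mul; rewrite mul1g.
have [U3 hU3 [U4 hU4 s34]] : exists2 U3, nbhs tg_one U3 &
    exists2 U4, nbhs tg_one U4 & forall a c, U3 a -> U4 c -> U1 (tg_mul a c).
  by apply: nbhs_mul; rewrite mul1g.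
have hU2' : nbhs (@tg_one G) [set a | U2 (tg_inv a)] by apply: nbhs_inv; rewrite invg1.
pose V := U3 `&` U4 `&` [set a | U2 (tg_inv a)].
have hV : nbhs tg_one V by apply: filterI; [apply: filterI|].
have sV : forall v1 v2 v3, V v1 -> V v2 -> V v3 ->
    U (tg_mul (tg_mul v1 v2) (tg_inv v3)).
  by move=> v1 v2 v3 [[h1 _] _] [[_ h2] _] [_ h3]; apply: s12 => //; exact: s34.
have hVi : nbhs (@tg_one G) [set a | V (tg_inv a)] by apply: nbhs_inv; rewrite invg1.
have [A [cA hA]] := nG _ hVi.
pose Wa (a : G) := [set w | V (tg_mul (tg_mul (tg_inv a) w) a)].
have hWa : forall a, nbhs tg_one (Wa a).
  move=> a.
  have h1 : nbhs (tg_mul (tg_mul (tg_inv a) tg_one) a) V by rewrite mulg1 mulVg.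
  exact: (nbhs_lmul (nbhs_rmul h1)).
have [a0 [u0 [Aa0 _]]] := hA tg_one.
have [e [he1 he2]] := enum_of_card_le Kinf Aa0 cA.
exists [set W | exists2 a, A a & W = Wa a]; split; [|split].
- apply: (small_card_le Kinf (s := fun k => Wa (e k))).
  by move=> _ [a Aa ->]; have [k _ <-] := he2 _ Aa; exists k.
- by move=> _ [a _ ->].
- move=> x; have [a [u [Aa [Vu ex]]]] := hA (tg_inv x).
  exists (Wa a); first by exists a.
  move=> w Ww.
  have -> : x = tg_mul (tg_inv u) (tg_inv a).
    by rewrite -invMg -ex invgK.
  have := sV _ _ _ Vu Ww Vu.
  by rewrite invMg !invgK !mulgA.
Qed.

Lemma narrow_transfer (K : Type) (G H : topGroup) (ph : G -> H) :
  tau_narrow K G -> epimorphism ph -> tau_narrow K H.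
Proof.
move=> nG [hm [pc ps]] U hU.
have hU' : nbhs tg_one (ph @^-1` U).
  have h := @pc tg_one U.
  have h' : nbhs (ph tg_one) U by rewrite (hom_one hm).
  by move: (h h'); exact.
have [A [cA hA]] := nG _ hU'.
exists (ph @` A); split.
  exact: card_le_trans (card_image_le _ _) cA.
move=> k; have [g <-] := ps k; have [a [u [Aa [Uu ->]]]] := hA g.
by exists (ph a), (ph u); split; [exists a|split; last exact: hm].
Qed.

Lemma open_transl (H : topGroup) (a : H) (O : set H) : open O ->
  open [set z | O (tg_mul (tg_inv a) z)].
Proof.
move=> oO; rewrite openE => z /= Oz.
apply: (@nbhs_lmul _ (tg_inv a) z O).
by move: oO; rewrite openE => /(_ _ Oz).
Qed.

Lemma weight_of_narrow (K : Type) (Kinf : infinite_set [set: K]) (H : topGroup) :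
  tau_narrow K H -> character_le K H -> weight_le K H.
Proof.
move=> nH cH.
have [B [cB [nB bB]]] := cH tg_one.
have [V0 BV0 _] := bB setT filterT.
have [eB [heB1 heB2]] := enum_of_card_le Kinf BV0 cB.
have hA : forall k, exists Ak : K -> H, forall h, exists a u,
    (exists k', Ak k' = a) /\ (eB k)° u /\ h = tg_mul a u.
  move=> k; have [A [cA hA]] := nH _ (nbhs_interior (nB _ (heB1 k))).
  have [a0 [u0 [Aa0 _]]] := hA tg_one.
  have [e [he1 he2]] := enum_of_card_le Kinf Aa0 cA.
  exists e => h; have [a [u [Aa [Uu ->]]]] := hA h.
  exists a, u; split => //; have [k' _ ek'] := he2 _ Aa; by exists k'.
have [Ak hAk] := choice hA.
have [p hp] := surj_KK Kinf.
pose bs k := [set z | (eB (p k).1)° (tg_mul (tg_inv (Ak (p k).1 (p k).2)) z)].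
exists (range bs); split; [|split].
- exact: (small_card_le Kinf (s := bs)).
- move=> _ [k _ <-]; apply: open_transl; exact: open_interior.
- move=> U h oU Uh.
  have hU : nbhs tg_one [set v | U (tg_mul h v)].
    apply: nbhs_transl'; move: oU; rewrite openE; exact.
  have [N hN [N' hN' sN]] : exists2 N, nbhs tg_one N & exists2 N', nbhs tg_one N' &
      forall a c, N a -> N' c -> U (tg_mul h (tg_mul a c)).
    have h1 : nbhs (tg_mul tg_one tg_one) [set v | U (tg_mul h v)] by rewrite mul1g.
    by have [N hN [N' hN' s]] := nbhs_mul h1; exists N => //; exists N'.
  have hNi : nbhs (@tg_one H) ([set a | N (tg_inv a)] `&` N').
    by apply: filterI => //; apply: nbhs_inv; rewrite invg1.
  have [W BW sW] := bB _ hNi.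
  have [k1 _ ek1] := heB2 _ BW.
  have [a [u [[k2 ek2] [Wu ehu]]]] := hAk k1 h.
  have [k ek] := hp (k1, k2).
  exists (bs k); first by exists k.
  rewrite /bs ek /= ek2; split.
    by rewrite ehu mulKg.
  move=> z Wz; have Wz' := nbhs_singleton Wz.
  have Wu' := nbhs_singleton Wu.
  rewrite ek1 in Wz' Wu'.
  have := sN _ _ (sW _ Wu').1 (sW _ Wz').2.
  by rewrite ehu mulgA mulgK mulVKg.
Qed.

Lemma weight_X (K : Type) (H : topGroup) (X : topologicalType)
  (tX : tychonoff_space X) (gm : H -> X -> X) (act : cont_action gm)
  (tr : transitive_action gm) (dO : d_open_action gm) :
  weight_le K H -> weight_le K X.
Proof.
move=> [BH [cBH [oBH bBH]]].
case: (pselect (exists x : X, True)) => [[x0 _]|nX]; last first.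
  exists set0; split; first exact: card_ge0.
  by split => // U x; exfalso; apply: nX; exists x.
exists ((fun V => (closure ((fun h => gm h x0) @` V))°) @` BH); split; [|split].
- exact: card_le_trans (card_image_le _ _) cBH.
- by move=> _ [V _ <-]; exact: open_interior.
- move=> U y oU Uy.
  have hU : nbhs y U by move: oU; rewrite openE; exact.
  have [W' hW' cW'] := tych_reg tX hU.
  have [c ec] := tr x0 y.
  have hI : nbhs c [set h | W' (gm h x0)].
    by apply: (nbhs_act_grp act); rewrite ec.
  have [V BV [Vc sV]] := bBH _ c (@open_interior _ _) (nbhs_interior hI).
  exists ((closure ((fun h => gm h x0) @` V))°); first by exists V.
  have sVW : (fun h => gm h x0) @` V `<=` W'.
    move=> _ [h Vh <-]; have := sV _ Vh; do 2 move=> /nbhs_singleton; done.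
  split.
    have hO : nbhs tg_one [set h | V (tg_mul h c)].
      apply: nbhs_rmul; rewrite mul1g; move: (oBH _ BV); rewrite openE; exact.
    have := dO y _ hO; apply: filterS; apply: closure_subset.
    move=> _ [h Vh <-]; exists (tg_mul h c) => //.
    by rewrite (actM act) ec.
  move=> z /nbhs_singleton /(closure_subset sVW); exact: cW'.
Qed.


Section Coset.
Variables (G : topGroup) (X : topologicalType) (piG : G -> X).
Hypothesis cs : coset_space_via piG.
Local Notation "x * y" := (tg_mul x y).
Local Notation "x ^-1" := (tg_inv x).
Local Notation "1" := (@tg_one G).

Lemma pi_compat g h c : piG g = piG h -> piG (c * g) = piG (c * h).
Proof.
case: cs => S [_ [_ [_ [fib _]]]].
move=> /fib e; apply/fib; by rewrite invMg -mulgA mulKg.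
Qed.

Lemma pi_cont : continuous piG.
Proof.
case: cs => S [_ [_ [_ [_ qt]]]].
move=> z W hW.
have [B [oB Bz] BW] : exists2 B, open_nbhs (piG z) B & B `<=` W.
  by move: hW; rewrite nbhsE.
apply: (@filterS _ _ _ (piG @^-1` B)); first by move=> w /BW.
by apply: open_nbhs_nbhs; split => //; exact/qt.
Qed.

Lemma pi_nbhs z (W0 : set X) : nbhs (piG z) W0 -> nbhs z (piG @^-1` W0).
Proof. move=> hW; have := @pi_cont z W0 hW; exact. Qed.

Lemma pi_open (Ob : set G) : open Ob -> open (piG @` Ob).
Proof.
case: cs => S [[S1 Ssub] [_ [_ [fib qt]]]].
move=> oO; apply/qt; rewrite openE.
move=> z [w1 Ow1 ew1].
have So : S (w1^-1 * z) by apply/fib.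
pose s := w1^-1 * z.
have hs : z * s^-1 = w1 by rewrite /s invMg invgK mulVKg.
have hO : nbhs (z * s^-1) Ob by rewrite hs; move: oO; rewrite openE; exact.
apply: filterS (nbhs_rmul hO) => w /= Ow.
exists (w * s^-1) => //; apply/fib.
rewrite invMg invgK -mulgA mulVg mulg1.
exact: So.
Qed.

Lemma natural_action : exists alpha : G -> X -> X,
  cont_action alpha /\ transitive_action alpha /\ d_open_action alpha /\
  (forall g h, alpha g (piG h) = piG (g * h)).
Proof.
have surj : forall y, exists g, piG g = y by case: cs => S [_ [_ [s _]]].
have [r hr] := choice surj.
pose alpha g x := piG (g * r x).
have hal : forall g h, alpha g (piG h) = piG (g * h).
  by move=> g h; rewrite /alpha; apply: pi_compat; rewrite hr.
exists alpha; split; [|split; [|split]] => //.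
- split; first by move=> x; rewrite /alpha mul1g hr.
  split; first by move=> g h x; have -> : alpha h x = piG (h * r x) by []; rewrite hal /alpha mulgA.
  move=> [g x] W /= hW.
  have [U hU [V hV sUV]] := nbhs_mul (pi_nbhs hW).
  exists (U, piG @` V°).
    split => //; apply: open_nbhs_nbhs; split.
      exact: pi_open (@open_interior _ _).
    by exists (r x); [exact: hV|exact: hr].
  move=> [g' x'] [/= Ug' [v Vv <-]] /=.
  rewrite hal; apply: sUV => //; exact: nbhs_singleton Vv.
- move=> x y; exists (r y * (r x)^-1); by rewrite /alpha mulgVK hr.
- move=> x Ob hO; rewrite /interior.
  apply: filterS (@subset_closure _ _) _.
  have oT : open [set z | Ob° (z * (r x)^-1)].
    rewrite openE => z /= hz; apply: (@nbhs_rmul _ z ((r x)^-1) (Ob°)).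
    by move: (@open_interior _ Ob); rewrite openE; apply.
  apply: (@filterS _ _ _ (piG @` [set z | Ob° (z * (r x)^-1)])).
    move=> _ [z hz <-]; exists (z * (r x)^-1).
      exact: nbhs_singleton hz.
    by rewrite /alpha mulgVK.
  apply: open_nbhs_nbhs; split; first exact: pi_open.
  exists (r x); last exact: hr.
  by rewrite /= mulgV.
Qed.

End Coset.

Lemma coset_H (G H : topGroup) (X : topologicalType)
  (tX1 : forall x : X, closed [set x]) (piG : G -> X) (cs : coset_space_via piG)
  (alpha : G -> X -> X) (hal : forall g h, alpha g (piG h) = piG (tg_mul g h))
  (gm : H -> X -> X) (gact : cont_action gm) (ph : G -> H)
  (epi : epimorphism ph) (e : forall g x, alpha g x = gm (ph g) x) :
  exists piH : H -> X, coset_space_via piH /\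
    (forall (g h : G) (h' : H), piG h = piH h' ->
       piG (tg_mul g h) = piH (tg_mul (ph g) h')).
Proof.
pose x0 := piG tg_one.
pose piH h := gm h x0.
have piHc : continuous piH.
  move=> h W hW; exact: (nbhs_act_grp gact hW).
have piHph : forall g, piH (ph g) = piG g.
  by move=> g; rewrite /piH -e /x0 hal mulg1.
exists piH; split.
  exists [set h | gm h x0 = x0]; split.
    split; first exact: (act1 gact).
    move=> a c /= ha hc.
    by rewrite (actM gact) -{1}hc (actK gact) ha.
  split; first exact: (continuous_closedP piH).1 piHc _ (tX1 x0).
  split.
    case: cs => S [_ [_ [surj _]]].
    by move=> y; have [g <-] := surj y; exists (ph g).
  split.
    move=> a c; rewrite /piH /= (actM gact); split.
      by move=> <-; rewrite (actK gact).
    by move=> h; rewrite -{1}h (actVK gact).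
  case: cs => S [_ [_ [_ [_ qt]]]].
  move=> U; split.
    by move=> oU; apply: open_comp => // h _; exact: piHc.
  move=> oU; apply/qt.
  have -> : piG @^-1` U = ph @^-1` (piH @^-1` U).
    by apply/seteqP; split => g /=; rewrite piHph.
  apply: open_comp => // g _; case: epi => _ [pc _]; exact: pc.
move=> g h h' ehh'.
rewrite /piH (actM gact) -e.
by rewrite -/(piH h') -ehh' hal.
Qed.


Lemma trans_transfer (G H : topGroup) (X : Type) (alpha : G -> X -> X)
  (gm : H -> X -> X) (ph : G -> H) :
  transitive_action alpha -> (forall g x, alpha g x = gm (ph g) x) ->
  transitive_action gm.
Proof. by move=> tr e x y; have [g <-] := tr x y; exists (ph g); rewrite e. Qed.

Unset Implicit Arguments.
Theorem corollary3p7 (K : Type) (X : topologicalType) :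
  infinite_set [set: K] -> tychonoff_space X -> character_le K X ->
  (* (a), coset space version *)
  (forall (G : topGroup) (piG : G -> X),
     tau_balanced K G -> coset_space_via piG ->
     exists (H : topGroup) (piH : H -> X) (phi : G -> H),
       coset_space_via piH /\ character_le K H /\ epimorphism phi /\
       (forall (g h : G) (h' : H), piG h = piH h' ->
          piG (tg_mul g h) = piH (tg_mul (phi g) h'))) /\
  (* (a), action version *)
  (forall (G : topGroup) (alpha : G -> X -> X),
     tau_balanced K G -> cont_action alpha -> transitive_action alpha ->
     d_open_action alpha ->
     exists (H : topGroup) (gam : H -> X -> X) (phi : G -> H),
       cont_action gam /\ transitive_action gam /\ d_open_action gam /\
       character_le K H /\ epimorphism phi /\
       (forall (g : G) (x : X), alpha g x = gam (phi g) x)) /\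
  (* (b), coset space version *)
  (forall (G : topGroup) (piG : G -> X),
     tau_narrow K G -> coset_space_via piG ->
     exists (H : topGroup) (piH : H -> X) (phi : G -> H),
       coset_space_via piH /\ weight_le K H /\ weight_le K X /\
       epimorphism phi /\
       (forall (g h : G) (h' : H), piG h = piH h' ->
          piG (tg_mul g h) = piH (tg_mul (phi g) h'))) /\
  (* (b), action version *)
  (forall (G : topGroup) (alpha : G -> X -> X),
     tau_narrow K G -> cont_action alpha -> transitive_action alpha ->
     d_open_action alpha ->
     exists (H : topGroup) (gam : H -> X -> X) (phi : G -> H),
       cont_action gam /\ transitive_action gam /\ d_open_action gam /\
       weight_le K H /\ weight_le K X /\ epimorphism phi /\
       (forall (g : G) (x : X), alpha g x = gam (phi g) x)).
Proof.
move=> Kinf tX chiX.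
have XH := tych_haus tX.
have tX1 := tX.1.
split; [|split; [|split]].
- move=> G piG Gbal cs.
  have [alpha [act [tr [dO hal]]]] := natural_action cs.
  have [H [gm [ph [gact [chH [epi e]]]]]] := core Kinf XH act tr Gbal chiX.
  have [piH [csH eqH]] := coset_H tX1 cs hal gact epi e.
  by exists H, piH, ph.
- move=> G alpha Gbal act tr dO.
  have [H [gm [ph [gact [chH [epi e]]]]]] := core Kinf XH act tr Gbal chiX.
  exists H, gm, ph; split => //; split; first exact: trans_transfer tr e.
  split; first exact: dopen_transfer dO epi e.
  by [].
- move=> G piG nG cs.
  have Gbal := narrow_balanced Kinf nG.
  have [alpha [act [tr [dO hal]]]] := natural_action cs.
  have [H [gm [ph [gact [chH [epi e]]]]]] := core Kinf XH act tr Gbal chiX.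
  have [piH [csH eqH]] := coset_H tX1 cs hal gact epi e.
  have wH := weight_of_narrow Kinf (narrow_transfer nG epi) chH.
  have wX := weight_X tX gact (trans_transfer tr e) (dopen_transfer dO epi e) wH.
  by exists H, piH, ph.
- move=> G alpha nG act tr dO.
  have Gbal := narrow_balanced Kinf nG.
  have [H [gm [ph [gact [chH [epi e]]]]]] := core Kinf XH act tr Gbal chiX.
  have wH := weight_of_narrow Kinf (narrow_transfer nG epi) chH.
  have wX := weight_X tX gact (trans_transfer tr e) (dopen_transfer dO epi e) wH.
  exists H, gm, ph; split => //; split; first exact: trans_transfer tr e.
  split; first exact: dopen_transfer dO epi e.
  by [].
Qed.
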